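(* Let $\gamma\ge0$ be an integer and let $\xi=\{\xi^m\}_{m\ge0}$ be given by $\xi^m=K_\gamma\mathbf{1}(m=\gamma)$ with $K_\gamma=\pm2\omega_\gamma\sqrt{\frac{2}{3C_{\gamma\gamma\gamma\gamma}}}$. Then $\mathcal{M}(\xi)=0$.
   Context: $\omega_n=n+1$, $C_{ijkm}=\frac2\pi\int_{-1}^1U_iU_jU_kU_m\sqrt{1-y^2}\,dy$ ($U_n$ Chebyshev polynomials of the second kind). $(A\xi)^m=\omega_m^2\xi^m$; $(f(u))^m=-\sum_{i,j,k\ge0}C_{ijkm}u^iu^ju^k$; $\Phi^t(\xi)=\{\xi^n\cos(\omega_nt)\}_n$; $\langle f\rangle(\xi)=\frac1{2\pi}\int_0^{2\pi}\Phi^t[f(\Phi^t(\xi))]dt$; and $\mathcal{M}(\xi)=A\xi+\langle f\rangle(\xi)$. *)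

(* Defs.v *)
From Stdlib Require Import Reals.
From Coquelicot Require Import Coquelicot.
Open Scope R_scope.

Fixpoint chebU (n : nat) (y : R) : R :=
  match n with
  | O => 1
  | S p => match p with
           | O => 2 * y
           | S q => 2 * y * chebU p y - chebU q y
           end
  end.

Definition omega (n : nat) : R := INR n + 1.

Definition Ccoef (i j k m : nat) : R :=
  2 / PI * RInt (fun y => chebU i y * chebU j y * chebU k y * chebU m y
                          * sqrt (1 - y ^ 2)) (-1) 1.

Definition Aop (xi : nat -> R) (m : nat) : R := omega m ^ 2 * xi m.

Definition fnl (u : nat -> R) (m : nat) : R :=
  - Series (fun i => Series (fun j => Series (fun k =>
        Ccoef i j k m * u i * u j * u k))).

Definition Phi (t : R) (xi : nat -> R) (n : nat) : R := xi n * cos (omega n * t).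

Definition favg (xi : nat -> R) (m : nat) : R :=
  1 / (2 * PI) * RInt (fun t => Phi t (fnl (Phi t xi)) m) 0 (2 * PI).

Definition Mop (xi : nat -> R) (m : nat) : R := Aop xi m + favg xi m.

(* Main.v *)
Require Import Defs.
From Stdlib Require Import Reals Lra Lia.
From Coquelicot Require Import Coquelicot.
Open Scope R_scope.

Lemma chebU_SS n y : chebU (S (S n)) y = 2 * y * chebU (S n) y - chebU n y.
Proof. reflexivity. Qed.

Lemma sum_single (f : nat -> R) g : (forall n, n <> g -> f n = 0) ->
  forall N, sum_n f N = if Nat.leb g N then f g else 0.
Proof.
  intros H N; induction N.
  - rewrite sum_O. destruct g; simpl. reflexivity. apply H; lia.
  - rewrite sum_Sn, IHN. unfold plus; simpl.
    destruct (Nat.leb g N) eqn:E1; destruct (Nat.leb g (S N)) eqn:E2.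
    + apply Nat.leb_le in E1. rewrite (H (S N)) by lia. ring.
    + apply Nat.leb_le in E1. apply Nat.leb_gt in E2. lia.
    + apply Nat.leb_gt in E1. apply Nat.leb_le in E2. assert (g = S N) by lia. subst. ring.
    + apply Nat.leb_gt in E2. rewrite (H (S N)) by lia. ring.
Qed.

Lemma series_single (f : nat -> R) g : (forall n, n <> g -> f n = 0) -> Series f = f g.
Proof.
  intros H. apply is_series_unique.
  change (is_lim_seq (sum_n f) (f g)).
  apply is_lim_seq_ext_loc with (fun _ => f g); [|apply is_lim_seq_const].
  exists g. intros N HN. rewrite (sum_single f g H N).
  apply Nat.leb_le in HN. rewrite HN. reflexivity.
Qed.

Lemma series_zero (f : nat -> R) : (forall n, f n = 0) -> Series f = 0.
Proof.
  intros H. rewrite (series_single f 0). apply H. intros; apply H.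
Qed.

Inductive isPoly : nat -> (R -> R) -> Prop :=
 | P_const c : isPoly 0 (fun _ => c)
 | P_mono d f : isPoly d f -> isPoly (S d) f
 | P_x d f : isPoly d f -> isPoly (S d) (fun y => y * f y)
 | P_add d f g : isPoly d f -> isPoly d g -> isPoly d (fun y => f y + g y)
 | P_scal d c f : isPoly d f -> isPoly d (fun y => c * f y)
 | P_ext d f g : isPoly d f -> (forall y, f y = g y) -> isPoly d g.

Lemma isPoly_mul d f e g : isPoly d f -> isPoly e g -> isPoly (d + e) (fun y => f y * g y).
Proof.
  intros Hf Hg; induction Hf.
  - apply P_scal; auto.
  - simpl. apply P_mono; auto.
  - simpl. eapply P_ext. apply P_x, IHHf. intros; simpl; ring.
  - eapply P_ext. apply (P_add _ _ _ IHHf1 IHHf2). intros; simpl; ring.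
  - eapply P_ext. apply (P_scal _ c _ IHHf). intros; simpl; ring.
  - eapply P_ext. apply IHHf. intros; simpl. rewrite H. reflexivity.
Qed.

Lemma isPoly_mono d e f : (d <= e)%nat -> isPoly d f -> isPoly e f.
Proof. induction 1; auto. intros; apply P_mono; auto. Qed.

Lemma chebU_poly2 n : isPoly n (chebU n) /\ isPoly (S n) (chebU (S n)).
Proof.
  induction n.
  - split. eapply P_ext. apply (P_const 1). intros; reflexivity. eapply P_ext. apply P_x, (P_const 2). intros; simpl; ring.
  - destruct IHn as [H1 H2]. split; auto.
    eapply P_ext. apply P_add.
    apply P_x. apply (P_scal _ 2). exact H2.
    apply (P_scal _ (-1)). apply P_mono, P_mono, H1.
    intros y. rewrite chebU_SS. ring.
Qed.

Lemma chebU_poly n : isPoly n (chebU n).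
Proof. apply chebU_poly2. Qed.

Lemma isPoly_cont d f : isPoly d f -> forall x, continuous f x.
Proof.
  induction 1; intros x.
  - apply continuous_const.
  - auto.
  - apply (continuous_mult (fun y => y) f); auto. apply continuous_id.
  - apply (continuous_plus f g); auto.
  - apply (continuous_mult (fun _ => c) f); auto. apply continuous_const.
  - eapply continuous_ext; eauto.
Qed.

Lemma is_RInt_scalR f a b k l : is_RInt f a b l -> is_RInt (fun y => k * f y) a b (k * l).
Proof. intros H. apply (is_RInt_scal f a b k l H). Qed.

Lemma is_RInt_plusR f g a b l1 l2 : is_RInt f a b l1 -> is_RInt g a b l2 ->
  is_RInt (fun y => f y + g y) a b (l1 + l2).
Proof. intros H1 H2. apply (is_RInt_plus f g a b l1 l2 H1 H2). Qed.

Lemma chebU_sin2 n t : chebU n (cos t) * sin t = sin (INR (S n) * t)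
  /\ chebU (S n) (cos t) * sin t = sin (INR (S (S n)) * t).
Proof.
  induction n.
  - simpl. split. ring_simplify. f_equal. ring.
    replace ((1+1)*t) with (t + t) by ring. rewrite sin_plus. ring.
  - destruct IHn as [H1 H2]. split; auto.
    rewrite chebU_SS.
    replace (INR (S (S (S n))) * t) with (INR (S (S n)) * t + t) by (rewrite !S_INR; ring).
    replace (INR (S n) * t) with (INR (S (S n)) * t - t) in H1 by (rewrite !S_INR; ring).
    rewrite sin_plus. rewrite sin_minus in H1.
    replace ((2 * cos t * chebU (S n) (cos t) - chebU n (cos t)) * sin t)
      with (2 * cos t * (chebU (S n) (cos t) * sin t) - chebU n (cos t) * sin t) by ring.
    rewrite H1, H2. ring.
Qed.

Lemma cos_int k a b : k <> 0 ->
  is_RInt (fun t => cos (k * t)) a b (sin (k * b) / k - sin (k * a) / k).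
Proof.
  intros Hk.
  apply (is_RInt_derive (fun t => sin (k * t) / k)).
  - intros x _. auto_derive; auto. field; auto.
  - intros x _. apply (ex_derive_continuous (K:=R_AbsRing) (V:=R_NormedModule) (fun t => cos (k*t))). auto_derive; auto.
Qed.

Lemma sin_nat_PI n : sin (INR n * PI) = 0.
Proof. apply sin_eq_0_1. exists (Z.of_nat n). rewrite INR_IZR_INZ. reflexivity. Qed.

Lemma is_RInt_val f a b (l l' : R) : is_RInt f a b l -> l = l' -> is_RInt f a b l'.
Proof. intros H <-; exact H. Qed.

Lemma is_RInt_extR (f g : R -> R) a b (l : R) :
  (forall x, Rmin a b < x < Rmax a b -> f x = g x) -> is_RInt f a b l -> is_RInt g a b l.
Proof. apply is_RInt_ext. Qed.

Definition wt (y : R) := sqrt (1 - y ^ 2).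

Lemma wt_cont x : continuous wt x.
Proof.
  unfold wt. apply continuous_sqrt_comp.
  apply (ex_derive_continuous (K:=R_AbsRing) (V:=R_NormedModule) (fun y => 1 - y^2)). auto_derive; auto.
Qed.

Lemma base_orth m : (1 <= m)%nat -> is_RInt (fun y => chebU m y * wt y) (-1) 1 0.
Proof.
  intros Hm.
  set (g := fun y => chebU m y * wt y).
  assert (Hc : forall x, continuous g x).
  { intros x. apply (continuous_mult (chebU m) wt). apply (isPoly_cont _ _ (chebU_poly m)). apply wt_cont. }
  assert (H1 := is_RInt_comp g cos (fun x => - sin x) 0 PI (fun x _ => Hc (cos x))).
  assert (H1' : is_RInt (fun y : R => scal (- sin y) (g (cos y))) 0 PI (RInt g (cos 0) (cos PI))).
  { apply H1. intros x _. split. auto_derive; auto. ring.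
    apply (ex_derive_continuous (K:=R_AbsRing) (V:=R_NormedModule) (fun x => - sin x)). auto_derive; auto. }
  clear H1. rename H1' into H1.
  assert (H2 : is_RInt (fun y : R => scal (- sin y) (g (cos y))) 0 PI 0).
  { apply is_RInt_extR with (fun y => (1/2) * (cos (INR (S (S m)) * y) + -1 * cos (INR m * y))).
    - intros x Hx. rewrite Rmin_left in Hx by (pose proof PI_RGT_0; lra).
      rewrite Rmax_right in Hx by (pose proof PI_RGT_0; lra).
      unfold g, wt. change (scal (- sin x) (chebU m (cos x) * sqrt (1 - cos x ^ 2))) with
        ((- sin x) * (chebU m (cos x) * sqrt (1 - cos x ^ 2))).
      assert (Hs : 0 <= sin x) by (apply sin_ge_0; lra).
      replace (1 - cos x ^ 2) with (sin x ^ 2) by (pose proof (sin2 x); unfold Rsqr in *; nra).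
      rewrite sqrt_pow2 by auto.
      replace (- sin x * (chebU m (cos x) * sin x)) with (- (chebU m (cos x) * sin x) * sin x) by ring.
      rewrite (proj1 (chebU_sin2 m x)).
      replace (INR (S (S m)) * x) with (INR (S m) * x + x) by (rewrite !S_INR; ring).
      replace (INR m * x) with (INR (S m) * x - x) by (rewrite !S_INR; ring).
      rewrite cos_plus, cos_minus. field.
    - apply is_RInt_val with (l := (1/2) * ((sin (INR (S (S m)) * PI) / INR (S (S m)) - sin (INR (S (S m)) * 0) / INR (S (S m)))
         + -1 * (sin (INR m * PI) / INR m - sin (INR m * 0) / INR m))).
      2:{ rewrite !sin_nat_PI, !Rmult_0_r, sin_0. unfold Rdiv. ring. }
      apply is_RInt_scalR. apply is_RInt_plusR.
      apply cos_int. apply not_0_INR; lia.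
      apply (is_RInt_scalR _ _ _ (-1)). apply cos_int. apply not_0_INR; lia. }
  intros.
  apply (is_RInt_unique (V:=R_CompleteNormedModule)) in H1. apply (is_RInt_unique (V:=R_CompleteNormedModule)) in H2.
  rewrite cos_0, cos_PI in H1. rewrite H1 in H2.
  assert (He : ex_RInt g (-1) 1).
  { apply (ex_RInt_continuous (V:=R_CompleteNormedModule)). intros; apply Hc. }
  pose proof (opp_RInt_swap (V:=R_CompleteNormedModule) g (-1) 1 He) as Hs. rewrite H2 in Hs.
  pose proof (RInt_correct (V:=R_CompleteNormedModule) g (-1) 1 He) as Hr.
  replace 0 with (RInt g (-1) 1). exact Hr.
  change (opp (RInt g (-1) 1)) with (- RInt g (-1) 1) in Hs. lra.
Qed.

Lemma orth d f : isPoly d f -> forall m, (d < m)%nat ->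
  is_RInt (fun y => f y * chebU m y * wt y) (-1) 1 0.
Proof.
  induction 1; intros m Hm.
  - apply is_RInt_val with (c * 0); [|ring].
    apply is_RInt_extR with (fun y => c * (chebU m y * wt y)).
    intros; ring. apply is_RInt_scalR, base_orth. lia.
  - apply IHisPoly. lia.
  - destruct m as [|p]; [lia|].
    apply is_RInt_val with ((1/2) * (0 + 0)); [|field].
    apply is_RInt_extR with (fun y => (1/2) * (f y * chebU (S (S p)) y * wt y + f y * chebU p y * wt y)).
    intros y _. rewrite chebU_SS. field.
    apply is_RInt_scalR, is_RInt_plusR; apply IHisPoly; lia.
  - apply is_RInt_val with (0 + 0); [|ring].
    apply is_RInt_extR with (fun y => f y * chebU m y * wt y + g y * chebU m y * wt y).
    intros; ring. apply is_RInt_plusR; auto.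
  - apply is_RInt_val with (c * 0); [|ring].
    apply is_RInt_extR with (fun y => c * (f y * chebU m y * wt y)).
    intros; ring. apply is_RInt_scalR; auto.
  - apply is_RInt_extR with (fun y => f y * chebU m y * wt y).
    intros; rewrite H0; ring. auto.
Qed.

Lemma C_zero g : Ccoef g g g (3 * g + 2) = 0.
Proof.
  unfold Ccoef.
  assert (Hp : isPoly (3 * g) (fun y => chebU g y * chebU g y * chebU g y)).
  { replace (3 * g)%nat with ((g + g) + g)%nat by lia.
    apply isPoly_mul. apply isPoly_mul; apply chebU_poly. apply chebU_poly. }
  pose proof (orth _ _ Hp (3 * g + 2)%nat ltac:(lia)) as H.
  apply (is_RInt_unique (V:=R_CompleteNormedModule)) in H. unfold wt in H.
  rewrite H. ring.
Qed.

Lemma fnl_single (v : nat -> R) g : (forall n, n <> g -> v n = 0) ->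
  forall m, fnl v m = - (Ccoef g g g m * v g * v g * v g).
Proof.
  intros H m. unfold fnl. f_equal.
  rewrite (series_single _ g).
  - rewrite (series_single _ g).
    + rewrite (series_single _ g). reflexivity.
      intros k Hk. rewrite (H k Hk). ring.
    + intros j Hj. apply series_zero. intros k. rewrite (H j Hj). ring.
  - intros i Hi. apply series_zero. intros j. apply series_zero. intros k.
    rewrite (H i Hi). ring.
Qed.

Definition dlt (k : R) : R := if Req_EM_T k 0 then 1 else 0.

Lemma cos_int2 k : (exists z, k = IZR z) ->
  is_RInt (fun t => cos (k * t)) 0 (2 * PI) (2 * PI * dlt k).
Proof.
  intros [z Hz]. unfold dlt. destruct (Req_EM_T k 0) as [E|E].
  - subst k. apply is_RInt_extR with (fun _ => 1).
    intros; rewrite E, Rmult_0_l, cos_0; reflexivity.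
    apply is_RInt_val with (scal (2 * PI - 0) 1). apply (is_RInt_const (V:=R_NormedModule)).
    change (scal (2 * PI - 0) 1) with ((2 * PI - 0) * 1). ring.
  - apply is_RInt_val with (sin (k * (2 * PI)) / k - sin (k * 0) / k).
    apply cos_int; auto.
    rewrite Rmult_0_r, sin_0. rewrite sin_eq_0_1. field; auto.
    exists (2 * z)%Z. rewrite mult_IZR, Hz. ring.
Qed.

Lemma cos3_id x y : cos x ^ 3 * cos y =
  3/8 * (cos ((x - y)) + cos ((x + y))) + 1/8 * (cos ((3*x - y)) + cos ((3*x + y))).
Proof.
  assert (H3 : cos (3 * x) = 4 * cos x ^ 3 - 3 * cos x).
  { replace (3 * x) with (x + x + x) by ring. rewrite !cos_plus, !sin_plus.
    assert (E : sin x * sin x = 1 - cos x * cos x).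
    { pose proof (sin2_cos2 x). unfold Rsqr in H. lra. }
    transitivity (cos x * cos x * cos x - 3 * (sin x * sin x) * cos x). ring.
    rewrite E. ring. }
  rewrite !cos_minus, !cos_plus, H3.
  field.
Qed.

Lemma isint_plus k1 k2 : (exists z, k1 = IZR z) -> (exists z, k2 = IZR z) -> exists z, k1 + k2 = IZR z.
Proof. intros [a ->] [b ->]. exists (a + b)%Z. rewrite plus_IZR; ring. Qed.
Lemma isint_opp k1 : (exists z, k1 = IZR z) -> exists z, - k1 = IZR z.
Proof. intros [a ->]. exists (- a)%Z. rewrite opp_IZR; ring. Qed.
Lemma isint_nat n : exists z, INR n = IZR z.
Proof. exists (Z.of_nat n). apply INR_IZR_INZ. Qed.
Lemma isint_omega n : exists z, omega n = IZR z.
Proof. unfold omega. apply isint_plus. apply isint_nat. exists 1%Z. reflexivity. Qed.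

Lemma trig_int a b : (exists z, a = IZR z) -> (exists z, b = IZR z) ->
  is_RInt (fun t => cos (a * t) ^ 3 * cos (b * t)) 0 (2 * PI)
    (3/8 * (2 * PI * dlt (a - b) + 2 * PI * dlt (a + b))
     + 1/8 * (2 * PI * dlt (3 * a - b) + 2 * PI * dlt (3 * a + b))).
Proof.
  intros Ha Hb.
  assert (H3 : exists z, 3 * a = IZR z).
  { destruct Ha as [z ->]. exists (3 * z)%Z. rewrite mult_IZR. reflexivity. }
  apply is_RInt_extR with (fun t => 3/8 * (cos ((a - b) * t) + cos ((a + b) * t))
     + 1/8 * (cos ((3 * a - b) * t) + cos ((3 * a + b) * t))).
  { intros t _. rewrite cos3_id. f_equal; f_equal; f_equal; f_equal; ring. }
  apply is_RInt_plusR; apply is_RInt_scalR; apply is_RInt_plusR; apply cos_int2;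
    unfold Rminus; try apply isint_plus; try apply isint_opp; auto.
Qed.

Lemma dlt0 : dlt 0 = 1.
Proof. unfold dlt. destruct (Req_EM_T 0 0); [reflexivity|congruence]. Qed.
Lemma dltnz k : k <> 0 -> dlt k = 0.
Proof. unfold dlt. destruct (Req_EM_T k 0); [congruence|reflexivity]. Qed.

Lemma omega_pos n : 0 < omega n.
Proof. unfold omega. pose proof (pos_INR n). lra. Qed.

Lemma K_lemma g K :
  K = 2 * omega g * sqrt (2 / (3 * Ccoef g g g g))
  \/ K = - (2 * omega g * sqrt (2 / (3 * Ccoef g g g g))) ->
  K = 0 \/ Ccoef g g g g * K ^ 2 = 8 / 3 * omega g ^ 2.
Proof.
  set (C := Ccoef g g g g). intros HK.
  destruct (Rle_dec C 0) as [Hc|Hc].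
  - left. assert (Hs : 2 / (3 * C) <= 0).
    { destruct (Req_dec C 0) as [E|E].
      - rewrite E, Rmult_0_r. unfold Rdiv. rewrite Rinv_0. lra.
      - unfold Rdiv. assert (/ (3 * C) < 0) by (apply Rinv_lt_0_compat; lra). lra. }
    rewrite (sqrt_neg_0 _ Hs) in HK. destruct HK as [->| ->]; ring.
  - right. assert (Hs : 0 <= 2 / (3 * C)).
    { unfold Rdiv. assert (0 < / (3 * C)) by (apply Rinv_0_lt_compat; lra). lra. }
    assert (E : K ^ 2 = 4 * omega g ^ 2 * (2 / (3 * C))).
    { rewrite <- (sqrt_sqrt _ Hs). destruct HK as [->| ->]; ring. }
    rewrite E. field. lra.
Qed.

Theorem lemma6p1 (gamma : nat) (K : R)
  (hK : K = 2 * omega gamma * sqrt (2 / (3 * Ccoef gamma gamma gamma gamma))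
        \/ K = - (2 * omega gamma * sqrt (2 / (3 * Ccoef gamma gamma gamma gamma)))) :
  forall m : nat, Mop (fun n => if Nat.eqb n gamma then K else 0) m = 0.
Proof.
  intros m. set (xi := fun n => if Nat.eqb n gamma then K else 0).
  set (a := omega gamma). set (b := omega m).
  set (C := Ccoef gamma gamma gamma m).
  assert (Hint : forall t, Phi t (fnl (Phi t xi)) m
     = (- (C * K ^ 3)) * (cos (a * t) ^ 3 * cos (b * t))).
  { intros t. change (Phi t (fnl (Phi t xi)) m) with (fnl (Phi t xi) m * cos (omega m * t)).
    rewrite (fnl_single (Phi t xi) gamma).
    - unfold Phi, xi. rewrite Nat.eqb_refl. unfold C, a, b. ring.
    - intros n Hn. unfold Phi, xi. rewrite (proj2 (Nat.eqb_neq n gamma) Hn). ring. }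
  assert (HR : RInt (fun t => Phi t (fnl (Phi t xi)) m) 0 (2 * PI)
     = (- (C * K ^ 3)) * (3/8 * (2 * PI * dlt (a - b) + 2 * PI * dlt (a + b))
     + 1/8 * (2 * PI * dlt (3 * a - b) + 2 * PI * dlt (3 * a + b)))).
  { apply (is_RInt_unique (V:=R_CompleteNormedModule)).
    apply is_RInt_extR with (fun t => (- (C * K ^ 3)) * (cos (a * t) ^ 3 * cos (b * t))).
    intros t _. rewrite Hint. reflexivity.
    apply is_RInt_scalR, trig_int; apply isint_omega. }
  unfold Mop, Aop, favg. fold xi. rewrite HR.
  pose proof (omega_pos gamma) as Ha. pose proof (omega_pos m) as Hb. fold a b in Ha, Hb.
  rewrite (dltnz (a + b)) by lra. rewrite (dltnz (3 * a + b)) by lra.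
  pose proof PI_RGT_0 as Hpi.
  destruct (Nat.eq_dec m gamma) as [E|E].
  - subst m. unfold xi. rewrite Nat.eqb_refl.
    fold a in b. unfold b. fold a. replace (a - a) with 0 by ring. rewrite dlt0.
    rewrite (dltnz (3 * a - a)) by lra.
    unfold C. destruct (K_lemma gamma K hK) as [-> | HK].
    + field. lra.
    + fold a in HK.
      replace (Ccoef gamma gamma gamma gamma * K ^ 3) with (Ccoef gamma gamma gamma gamma * K ^ 2 * K) by ring.
      rewrite HK. field. lra.
  - unfold xi. rewrite (proj2 (Nat.eqb_neq m gamma) E).
    assert (Hab : a - b <> 0).
    { unfold a, b, omega. intros H. apply E. apply INR_eq. lra. }
    rewrite (dltnz _ Hab).
    destruct (Nat.eq_dec m (3 * gamma + 2)) as [E2|E2].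
    + unfold C. rewrite E2, C_zero. field. lra.
    + assert (H3 : 3 * a - b <> 0).
      { unfold a, b, omega. intros H. apply E2. apply INR_eq.
        rewrite plus_INR, mult_INR. replace (INR 3) with 3 by (simpl; ring).
        replace (INR 2) with 2 by (simpl; ring). lra. }
      rewrite (dltnz _ H3). field. lra.
Qed.
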